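(* Let $G$ be a connected simple graph with $n\ge 2$ vertices and $m$ edges. Then \[ \mathscr{K}_e(G)=\mathscr{K}_v(G)+2m-n . \]
   Context: Kemeny's constant of an irreducible finite Markov chain with transition matrix $P$ whose eigenvalues (with multiplicity) are $1=\rho_1,\rho_2,\dots,\rho_N$ (with $1$ a simple eigenvalue) is $\mathscr{K}(P)=\sum_{i=2}^{N}\frac{1}{1-\rho_i}$; equivalently $\mathscr{K}(P)=\sum_{j\ne i}\pi_j m_{ij}$ (independent of $i$), where $\pi$ is the stationary distribution and $m_{ij}$ the mean first passage time from state $i$ to state $j$. The vertex Kemeny's constant $\mathscr{K}_v(G)$ is Kemeny's constant of the simple random walk on the vertices of $G$, with transition matrix $P=D^{-1}A$ ($A$ the adjacency matrix, $D$ the diagonal degree matrix). The edge Kemeny's constant $\mathscr{K}_e(G)$ is Kemeny's constant of the simple random walk on the arcs of $G$: the states are the $2m$ arcs $(u,v)$ with $\{u,v\}\in E(G)$, and from arc $(u,v)$ the walk moves to arc $(v,w)$ with probability $1/\deg(v)$ for each neighbor $w$ of $v$ (including $w=u$), all other transition probabilities being $0$. *)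

(* Defs.v *)
From mathcomp Require Import all_boot all_order all_algebra all_field.
Set Implicit Arguments. Unset Strict Implicit. Unset Printing Implicit Defensive.
Import Order.TTheory GRing.Theory Num.Theory.
Local Open Scope ring_scope.

Definition eigenvalues (N : nat) (P : 'M[algC]_N) : seq algC :=
  projT1 (closed_field_poly_normal (char_poly P)).

(* Kemeny's constant: sum over the eigenvalues other than one copy of the
   (simple) eigenvalue 1 of 1/(1 - rho). *)
Definition kemeny (N : nat) (P : 'M[algC]_N) : algC :=
  \sum_(r <- rem 1 (eigenvalues P)) (1 - r)^-1.

Section Graph.
Variables (T : finType) (e : rel T).

Definition deg (v : T) : nat := #|[set w | e v w]|.

Definition nedges : nat :=
  #|[set E : {set T} | [exists u, exists v, e u v && (E == [set u; v])]]|.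

Definition vertex_walk : 'M[algC]_#|T| :=
  \matrix_(i, j) ((e (enum_val i) (enum_val j))%:R / (deg (enum_val i))%:R).

Definition arc := {p : T * T | e p.1 p.2}.

Definition arc_walk : 'M[algC]_#|{: arc}| :=
  \matrix_(i, j)
    (((val (enum_val i)).2 == (val (enum_val j)).1)%:R
       / (deg (val (enum_val i)).2)%:R).

Definition vertex_kemeny : algC := kemeny vertex_walk.
Definition edge_kemeny : algC := kemeny arc_walk.
End Graph.

(* Main.v *)
From mathcomp Require Import all_boot all_order all_algebra all_field.
Require Import Defs.
Set Implicit Arguments. Unset Strict Implicit. Unset Printing Implicit Defensive.
Import GRing.Theory Num.Theory.
Local Open Scope ring_scope.
Lemma sylvester (F : comNzRingType) k n (A : 'M[F]_(k, n)) (B : 'M[F]_(n, k)) :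
  'X^n * char_poly (A *m B) = 'X^k * char_poly (B *m A).
Proof.
rewrite /char_poly /char_poly_mx !map_mxM.
set a := map_mx polyC A; set b := map_mx polyC B.
pose M := block_mx ('X%:M : 'M_k) a b (1%:M : 'M_n).
pose L1 := block_mx (1%:M : 'M_k) (-a) 0 ('X%:M : 'M_n).
pose L2 := block_mx (1%:M : 'M_k) 0 (-b) ('X%:M : 'M_n).
have h1 : L1 *m M = block_mx ('X%:M - a *m b) 0 ('X *: b) ('X%:M : 'M_n).
  rewrite mulmx_block !mul1mx !mul0mx !mulmx1 !mul_scalar_mx !add0r.
  by rewrite mulNmx addrN.

have h2 : L2 *m M = block_mx ('X%:M : 'M_k) a 0 ('X%:M - b *m a).
  rewrite mulmx_block !mul1mx !mul0mx !mulmx1 !mul_scalar_mx !addr0.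
  by rewrite mul_mx_scalar scalerN addNr mulNmx addrC.
have d1 := congr1 determinant h1; have d2 := congr1 determinant h2.
rewrite det_mulmx det_lblock det_ublock det1 det_scalar mul1r in d1.
rewrite det_mulmx det_lblock det_ublock det1 det_scalar mul1r in d2.
by rewrite mulrC -d1 d2 det_scalar.
Qed.

Lemma eigenvaluesE N (P : 'M[algC]_N) :
  char_poly P = \prod_(z <- eigenvalues P) ('X - z%:P).
Proof.
rewrite /eigenvalues; case: (closed_field_poly_normal _) => r /= hr.
by rewrite {1}hr (monicP (char_poly_monic P)) scale1r.
Qed.

Lemma Xn_prod n : 'X^n = \prod_(z <- nseq n (0 : algC)) ('X - z%:P).
Proof.
elim: n => [|n IH]; first by rewrite big_nil expr0.
by rewrite /= big_cons subr0 exprS IH.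
Qed.

Definition ks (s : seq algC) := \sum_(r <- rem 1 s) (1 - r)^-1.

Lemma ks_perm s t : perm_eq s t -> ks s = ks t.
Proof.
move=> pst; rewrite /ks; apply: perm_big.
have [h1|h1] := boolP (1 \in s).
  have h2 : 1 \in t by rewrite -(perm_mem pst).
  have e1 := perm_to_rem h1; rewrite perm_sym in e1.
  have := perm_trans (perm_trans e1 pst) (perm_to_rem h2).
  by rewrite perm_cons.
have h2 : 1 \notin t by rewrite -(perm_mem pst).
by rewrite !rem_id.
Qed.

Lemma ks_cat s n : ks (s ++ nseq n 0) = ks s + n%:R.
Proof.
rewrite /ks.
have -> : rem 1 (s ++ nseq n 0) = rem 1 s ++ nseq n 0.
  elim: s => [|y s IH] /=.
    by rewrite rem_id // mem_nseq negb_and oner_neq0 orbT.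
  by case: (y == 1) => //=; rewrite IH.
rewrite big_cat /=; congr (_ + _).
elim: n => [|n IH]; first by rewrite big_nil.
by rewrite /= big_cons IH subr0 invr1 -natr1 addrC.
Qed.

Lemma kemeny_mul k n (A : 'M[algC]_(k,n)) B :
  kemeny (A *m B) + n%:R = kemeny (B *m A) + k%:R.
Proof.
have h := sylvester A B.
rewrite !eigenvaluesE !Xn_prod -!big_cat /= in h.
have p := prod_XsubC_eq h.
rewrite perm_catC perm_sym perm_catC perm_sym in p.
have := ks_perm p; rewrite !ks_cat /ks /kemeny => ->.
by [].
Qed.
Section G.
Variables (T : finType) (e : rel T).

Definition Rm : 'M[algC]_(#|{: arc e}|, #|T|) :=
  \matrix_(i, j) ((val (enum_val i)).2 == enum_val j)%:R.
Definition Sm : 'M[algC]_(#|T|, #|{: arc e}|) :=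
  \matrix_(i, j) ((enum_val i == (val (enum_val j)).1)%:R / (deg e (enum_val i))%:R).

Lemma arc_walkE : arc_walk e = Rm *m Sm.
Proof.
apply/matrixP => i j; rewrite !mxE.
rewrite (bigD1 (enum_rank (val (enum_val i)).2)) //= big1 ?addr0.
  by rewrite !mxE enum_rankK eqxx mul1r.
move=> l hl; rewrite !mxE; case: eqP => [h|]; last by rewrite mul0r.
by move: hl; rewrite h enum_valK eqxx.
Qed.

Lemma vertex_walkE : vertex_walk e = Sm *m Rm.
Proof.
apply/matrixP => i j; rewrite !mxE.
have [hij|hij] := boolP (e (enum_val i) (enum_val j)).
  pose a : arc e := exist _ (enum_val i, enum_val j) hij.
  rewrite (bigD1 (enum_rank a)) //= big1 ?addr0.
    by rewrite !mxE enum_rankK /= !eqxx mulr1.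
  move=> l hl; rewrite !mxE.
  case: eqP => [h1|]; last by rewrite mul0r mul0r.
  case: eqP => [h2|]; last by rewrite mulr0.
  exfalso; move/negP: hl; apply; apply/eqP; apply: enum_val_inj.
  rewrite enum_rankK; apply: val_inj => /=.
  by rewrite [LHS]surjective_pairing -h1 h2.
rewrite mul0r big1 //.
move=> l _; rewrite !mxE.
case: eqP => [h1|]; last by rewrite mul0r mul0r.
case: eqP => [h2|]; last by rewrite mulr0.
exfalso; move/negP: hij; apply; rewrite h1 -h2.
by case: (enum_val l) => [[x y]].
Qed.

End G.
Lemma card_arc (T : finType) (e : rel T) :
  symmetric e -> irreflexive e -> #|{: arc e}| = (2 * nedges e)%N.
Proof.
move=> esym eirr.
set Es := [set E : {set T} | [exists u, exists v, e u v && (E == [set u; v])]].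
pose p (a : arc e) := [set (val a).1; (val a).2].
rewrite -sum1_card (partition_big p (mem Es)) /=; last first.
  move=> a _; rewrite inE; apply/existsP; exists (val a).1; apply/existsP.
  by exists (val a).2; rewrite eqxx andbT; exact: (valP a).
rewrite /nedges -/Es mulnC -sum_nat_const; apply: eq_bigr => E.
rewrite inE => /existsP [u /existsP [v /andP [huv /eqP ->]]].
have hvu : e v u by rewrite esym.
pose a1 : arc e := exist _ (u, v) huv.
pose a2 : arc e := exist _ (v, u) hvu.
rewrite sum1_card (@eq_card _ _ (pred2 a1 a2)) ?card2.
  case: eqP => // h; have := congr1 (fun a : arc e => (val a).2) h => /= huv'.
  by have := huv; rewrite huv' eirr.
move=> a; change ((p a == [set u; v]) = (a \in pred2 a1 a2)); rewrite inE /p.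
apply/eqP/orP => [h|].
  have hx : (val a).1 \in [set u; v] by rewrite -h !inE eqxx.
  have hy : (val a).2 \in [set u; v] by rewrite -h !inE eqxx orbT.
  have hne : (val a).1 != (val a).2.
    by apply/eqP => hh; have := valP a; rewrite /= hh eirr.
  rewrite !inE in hx hy.
  case/orP: hx => /eqP hx; case/orP: hy => /eqP hy.
  - by move: hne; rewrite hx hy eqxx.
  - by left; apply/eqP/val_inj; rewrite [LHS]surjective_pairing hx hy.
  - by right; apply/eqP/val_inj; rewrite [LHS]surjective_pairing hx hy.
  - by move: hne; rewrite hx hy eqxx.
by case=> /eqP -> //=; rewrite setUC.
Qed.

Theorem theorem2p9 (T : finType) (e : rel T)
    (e_sym : symmetric e) (e_irr : irreflexive e)
    (e_conn : forall x y : T, connect e x y)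
    (hn : (2 <= #|T|)%N) :
  edge_kemeny e = vertex_kemeny e + (2 * nedges e)%:R - (#|T|)%:R.
Proof.
rewrite /edge_kemeny /vertex_kemeny arc_walkE vertex_walkE.
have h := kemeny_mul (Rm e) (Sm e).
have hk : (#|{: arc e}|%:R : algC) = (2 * nedges e)%:R by rewrite card_arc.
by rewrite -hk -h addrK.
Qed.
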